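(* Let $\alpha$ be a graph function on a strongly connected digraph $G$. Applying a lowering operation (at any vertex) to $\alpha$ cannot increase the raising imbalance $\rho^R_v$ at any vertex $v$. Symmetrically, applying a raising operation cannot increase the lowering imbalance $\rho^L_v$ at any vertex $v$.
   Context: $G$ is a strongly connected directed graph (self-loops allowed). A graph function assigns a real weight $\alpha_{uv}$ to each edge $(u,v)$. Let $\alpha_v^{\text{in}}=\max_{u:(u,v)\in G}\alpha_{uv}$, $\alpha_v^{\text{out}}=\max_{w:(v,w)\in G}\alpha_{vw}$. A balancing operation at $v$ adds $(\alpha_v^{\text{out}}-\alpha_v^{\text{in}})/2$ to every edge weight $\alpha_{uv}$ with $u\neq v$, subtracts it from every $\alpha_{vw}$ with $w\ne v$, and leaves a self-loop at $v$ unchanged. $\rho_v^R=\max\{0,\alpha_v^{\text{out}}-\alpha_v^{\text{in}}\}$, $\rho_v^L=\max\{0,\alpha_v^{\text{in}}-\alpha_v^{\text{out}}\}$. A raising operation at $v$ performs the balancing operation at $v$ if $\rho^R_v>0$ and nothing otherwise; a lowering operation at $v$ performs it if $\rho^L_v>0$ and nothing otherwise. *)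

(* Defs.v *)
From mathcomp Require Import all_boot all_order all_algebra.
Set Implicit Arguments. Unset Strict Implicit. Unset Printing Implicit Defensive.
Import Order.TTheory GRing.Theory Num.Theory.
Local Open Scope ring_scope.

Section GraphFun.
Variables (R : realFieldType) (V : finType) (E : rel V).

Definition strongly_connected : Prop := forall u v : V, connect E u v.

(* maximum of a sequence of reals (0 on the empty sequence; never used on an
   empty sequence for strongly connected graphs with an edge) *)
Definition seqmax (s : seq R) : R := foldr Num.max (head 0 s) s.

Definition alpha_in (a : V -> V -> R) (v : V) : R :=
  seqmax [seq a u v | u <- enum V & E u v].
Definition alpha_out (a : V -> V -> R) (v : V) : R :=
  seqmax [seq a v w | w <- enum V & E v w].

Definition rhoR (a : V -> V -> R) (v : V) : R :=
  Num.max 0 (alpha_out a v - alpha_in a v).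
Definition rhoL (a : V -> V -> R) (v : V) : R :=
  Num.max 0 (alpha_in a v - alpha_out a v).

Definition balance (a : V -> V -> R) (v : V) : V -> V -> R :=
  let d := (alpha_out a v - alpha_in a v) / 2 in
  fun x y => a x y + (if (y == v) && (x != v) then d else 0)
                   - (if (x == v) && (y != v) then d else 0).

Definition raise (a : V -> V -> R) (v : V) : V -> V -> R :=
  if 0 < rhoR a v then balance a v else a.
Definition lower (a : V -> V -> R) (v : V) : V -> V -> R :=
  if 0 < rhoL a v then balance a v else a.
End GraphFun.

(* Main.v *)
Require Import Defs.
From mathcomp Require Import all_boot all_order all_algebra.
From mathcomp Require Import lra.
Import Order.TTheory GRing.Theory Num.Theory.
Local Open Scope ring_scope.

Section Aux.
Variables (R : realFieldType) (V : finType).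

Lemma foldr_max_ge (b : R) t : b <= foldr Num.max b t /\
  forall x, x \in t -> x <= foldr Num.max b t.
Proof.
elim: t => [|y t [IH1 IH2]] /=; first by split.
split; first by rewrite le_max IH1 orbT.
move=> x; rewrite inE => /orP [/eqP ->|xt]; first by rewrite le_max lexx.
by rewrite le_max IH2 ?orbT.
Qed.

Lemma foldr_max_in (b : R) t : foldr Num.max b t \in b :: t.
Proof.
elim: t => [|y t IH] /=; first by rewrite inE.
rewrite maxEle; case: ifP => _.
  move: IH; rewrite !inE => /orP [->|->]; by rewrite ?orbT.
by apply/mem_behead; rewrite /= mem_head.
Qed.

Definition MM (P : pred V) (f : V -> R) := seqmax [seq f u | u <- enum V & P u].

Lemma MM_ub (P : pred V) (f : V -> R) u : P u -> f u <= MM P f.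
Proof.
move=> Pu; rewrite /MM /seqmax.
have H : f u \in [seq f u | u <- enum V & P u].
  by apply: map_f; rewrite mem_filter Pu mem_enum.
by case: (foldr_max_ge (head 0 [seq f u | u <- enum V & P u]) [seq f u | u <- enum V & P u]) => _ ->.
Qed.

Lemma MM_cases (P : pred V) (f : V -> R) : ((forall u, ~~ P u) /\ MM P f = 0) \/ exists2 u, P u & MM P f = f u.
Proof.
rewrite /MM /seqmax.
case E: [seq f u | u <- enum V & P u] => [|x t].
  left; split => //= u; apply/negP => Pu.
  have : f u \in [seq f u | u <- enum V & P u].
    by apply: map_f; rewrite mem_filter Pu mem_enum.
  by rewrite E.
right.
have : foldr Num.max (head 0 (x :: t)) (x :: t) \in x :: t.
  move: (foldr_max_in x (x :: t)); rewrite [in X in X -> _]inE => /orP [/eqP ->|//].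
  exact: mem_head.
rewrite -E => /mapP [u]; rewrite mem_filter => /andP [Pu _] ->.
by exists u.
Qed.

Lemma MM_mono (P : pred V) (f g : V -> R) : (forall u, P u -> f u <= g u) -> MM P f <= MM P g.
Proof.
move=> H; case: (MM_cases P f) => [[nP ->]|[u Pu ->]].
  case: (MM_cases P g) => [[_ ->]|[u Pu]] //.
  by move: (nP u); rewrite Pu.
exact: le_trans (H u Pu) (MM_ub P g u Pu).
Qed.
End Aux.
Arguments MM {R V}. Arguments MM_ub {R V}. Arguments MM_cases {R V}. Arguments MM_mono {R V}.

Lemma MM_none (R : realFieldType) (V : finType) (P : pred V) (f : V -> R) :
  (forall u, ~~ P u) -> MM P f = 0.
Proof.
move=> nP; case: (MM_cases P f) => [[_ ->]|[u Pu _]] //.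
by move: (nP u); rewrite Pu.
Qed.

Lemma max0_mono (R : realFieldType) (x y : R) : x <= y -> Num.max 0 x <= Num.max 0 y.
Proof. by move=> H; rewrite ge_max !le_max lexx /= H orbT. Qed.

Lemma max0_neg (R : realFieldType) (x y : R) : x <= 0 -> Num.max 0 x <= Num.max 0 y.
Proof. by move=> H; rewrite ge_max !le_max lexx /= H. Qed.

Section Main.
Variables (R : realFieldType) (V : finType) (E : rel V) (a : V -> V -> R) (v : V).

Let d := (alpha_out E a v - alpha_in E a v) / 2.
Let b := balance E a v.

Lemma b_vv : b v v = a v v.
Proof. by rewrite /b /balance eqxx /= addr0 subr0. Qed.

Lemma b_xv x : x != v -> b x v = a x v + d.
Proof. by move=> H; rewrite /b /balance eqxx H /= (negbTE H) subr0. Qed.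

Lemma b_vy y : y != v -> b v y = a v y - d.
Proof. by move=> H; rewrite /b /balance eqxx H /= (negbTE H) addr0. Qed.

Lemma b_xw x w : w != v -> b x w = a x w - (if x == v then d else 0).
Proof.
move=> H; rewrite /b /balance (negbTE H) /= addr0 ?andbT.
by case: (x == v).
Qed.

Lemma b_wy w y : w != v -> b w y = a w y + (if y == v then d else 0).
Proof.
move=> H; rewrite /b /balance (negbTE H) /= subr0 ?andbT.
by case: (y == v).
Qed.

Lemma in_def (c : V -> V -> R) w : alpha_in E c w = MM (fun u => E u w) (fun u => c u w).
Proof. by []. Qed.
Lemma out_def (c : V -> V -> R) w : alpha_out E c w = MM (fun u => E w u) (fun u => c w u).
Proof. by []. Qed.

Lemma neg_case : alpha_out E a v < alpha_in E a v ->
  alpha_out E b v <= alpha_in E b v.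
Proof.
move=> Hlt.
have Hout : alpha_out E b v <= alpha_out E a v - d.
  rewrite out_def; case: (MM_cases (fun u => E v u) (fun u => b v u)) => [[nP ->]|[y Py ->]].
    have : alpha_out E a v = 0 by rewrite out_def MM_none.
    rewrite /d; move: Hlt; move=> ? ?; lra.
  have ub := MM_ub (fun u => E v u) (fun u => a v u) y Py.
  rewrite -out_def in ub.
  have [yv|yv] := eqVneq y v; first by subst y; rewrite b_vv; rewrite /d; lra.
  rewrite b_vy //; rewrite /d; lra.
have Hin : alpha_in E a v + d <= alpha_in E b v.
  case: (MM_cases (fun u => E u v) (fun u => a u v)) => [[nP e]|[u Pu e]].
    rewrite -in_def in e.
    have : alpha_in E b v = 0 by rewrite in_def MM_none.
    rewrite /d; move: Hlt; rewrite e => ? ->; lra.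
  rewrite -in_def in e.
  have [uv|uv] := eqVneq u v.
    subst u.
    have ub := MM_ub (fun u => E v u) (fun u => a v u) v Pu.
    rewrite -out_def -e in ub; lra.
  have ub := MM_ub (fun u => E u v) (fun u => b u v) u Pu.
  rewrite -in_def b_xv // in ub; lra.
rewrite /d in Hout Hin; lra.
Qed.

Lemma pos_case : alpha_in E a v < alpha_out E a v ->
  alpha_in E b v <= alpha_out E b v.
Proof.
move=> Hlt.
have Hin : alpha_in E b v <= alpha_in E a v + d.
  rewrite in_def; case: (MM_cases (fun u => E u v) (fun u => b u v)) => [[nP ->]|[y Py ->]].
    have : alpha_in E a v = 0 by rewrite in_def MM_none.
    rewrite /d; move: Hlt; move=> ? ?; lra.
  have ub := MM_ub (fun u => E u v) (fun u => a u v) y Py.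
  rewrite -in_def in ub.
  have [yv|yv] := eqVneq y v; first by subst y; rewrite b_vv; rewrite /d; lra.
  rewrite b_xv //; rewrite /d; lra.
have Hout : alpha_out E a v - d <= alpha_out E b v.
  case: (MM_cases (fun u => E v u) (fun u => a v u)) => [[nP e]|[u Pu e]].
    rewrite -out_def in e.
    have : alpha_out E b v = 0 by rewrite out_def MM_none.
    rewrite /d; move: Hlt; rewrite e => ? ->; lra.
  rewrite -out_def in e.
  have [uv|uv] := eqVneq u v.
    subst u.
    have ub := MM_ub (fun u => E u v) (fun u => a u v) v Pu.
    rewrite -in_def -e in ub; lra.
  have ub := MM_ub (fun u => E v u) (fun u => b v u) u Pu.
  rewrite -out_def b_vy // in ub; lra.
rewrite /d in Hout Hin; lra.
Qed.

Lemma other_in w : w != v -> (d <= 0 -> alpha_in E a w <= alpha_in E b w) /\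
                              (0 <= d -> alpha_in E b w <= alpha_in E a w).
Proof.
move=> wv; split=> Hd; rewrite !in_def; apply: MM_mono => u _; rewrite b_xw //;
  case: (u == v); lra.
Qed.

Lemma other_out w : w != v -> (d <= 0 -> alpha_out E b w <= alpha_out E a w) /\
                              (0 <= d -> alpha_out E a w <= alpha_out E b w).
Proof.
move=> wv; split=> Hd; rewrite !out_def; apply: MM_mono => u _; rewrite b_wy //;
  case: (u == v); lra.
Qed.

End Main.
Arguments other_in {R V} E a {v w}. Arguments other_out {R V} E a {v w}.
Arguments neg_case {R V} E a v. Arguments pos_case {R V} E a v.

Theorem proposition1 (R : realFieldType) (V : finType) (E : rel V)
  (a : V -> V -> R) :
  strongly_connected E ->
  (forall v w : V, rhoR E (lower E a v) w <= rhoR E a w) /\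
  (forall v w : V, rhoL E (raise E a v) w <= rhoL E a w).
Proof.
move=> _; split=> v w.
- rewrite /lower; case: ifP => H; last exact: lexx.
  have Hlt : alpha_out E a v < alpha_in E a v.
    move: H; rewrite /rhoL lt_max ltxx /= subr_gt0 //.
  have [->|wv] := eqVneq w v.
    by apply: max0_neg; rewrite subr_le0; apply: neg_case.
  have Hd : (alpha_out E a v - alpha_in E a v) / 2 <= 0 by lra.
  have [H1 _] := other_in E a wv.
  have [H2 _] := other_out E a wv.
  apply: max0_mono; move: (H1 Hd) (H2 Hd); lra.
- rewrite /raise; case: ifP => H; last exact: lexx.
  have Hlt : alpha_in E a v < alpha_out E a v.
    move: H; rewrite /rhoR lt_max ltxx /= subr_gt0 //.
  have [->|wv] := eqVneq w v.
    by apply: max0_neg; rewrite subr_le0; apply: pos_case.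
  have Hd : 0 <= (alpha_out E a v - alpha_in E a v) / 2 by lra.
  have [_ H1] := other_in E a wv.
  have [_ H2] := other_out E a wv.
  apply: max0_mono; move: (H1 Hd) (H2 Hd); lra.
Qed.
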